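(* For $n\ge 0$ let $s_n=\sum_{r=0}^{n} 1/r!$ and define the integer $A_n$ by $A_n/n! = s_n$, i.e. $A_n=\sum_{r=0}^n n!/r!$. Let $d_n=\gcd(A_n,n!)$. Then for every $n\ge 0$, $$d_n\, d_{n+1}\, d_{n+2} \le (n+3)!.$$ *)

(* Defs.v *)
From mathcomp Require Import all_boot.
Set Implicit Arguments. Unset Strict Implicit. Unset Printing Implicit Defensive.

(* A_n = sum_{r=0}^n n!/r!  (each division is exact since r <= n),
   so that A_n / n! = s_n = sum_{r=0}^n 1/r!. *)
Definition A (n : nat) : nat := \sum_(r < n.+1) n`! %/ r`!.

Definition d (n : nat) : nat := gcdn (A n) n`!.

(* Main.v *)
Require Import Defs.
From mathcomp Require Import all_boot.

Lemma fact_dvd r k : r`! %| (r + k)`!.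
Proof.
elim: k => [|k IH]; first by rewrite addn0.
by rewrite addnS factS dvdn_mull.
Qed.

Lemma A_rec n : A n.+1 = n.+1 * A n + 1.
Proof.
rewrite /A big_ord_recr /= divnn fact_gt0; congr (_ + _).
rewrite big_distrr /=; apply: eq_bigr => i _.
have hi : i <= n by rewrite -ltnS ltn_ord.
rewrite factS muln_divA //.
by have := fact_dvd i (n - i); rewrite subnKC.
Qed.

Lemma gcd_rec a k : gcdn a (k * a + 1) = 1.
Proof. by rewrite gcdnMDl gcdn1. Qed.

Theorem lemma2p2 (n : nat) : d n * d n.+1 * d n.+2 <= n.+3`!.
Proof.
apply: dvdn_leq; first exact: fact_gt0.
set a := d n; set b := d n.+1; set c := d n.+2.
have Ha : a %| A n by exact: dvdn_gcdl.
have Hb : b %| A n.+1 by exact: dvdn_gcdl.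
have Hc : c %| A n.+2 by exact: dvdn_gcdl.
have Fa : a %| n.+2`!.
  apply: dvdn_trans (dvdn_gcdr _ _) _; rewrite -(addn2 n); exact: fact_dvd.
have Fb : b %| n.+2`!.
  apply: dvdn_trans (dvdn_gcdr _ _) _; rewrite -(addn1 n.+1); exact: fact_dvd.
have Fc : c %| n.+2`! by exact: dvdn_gcdr.
have cop01 : coprime (A n) (A n.+1) by rewrite /coprime A_rec gcd_rec.
have cop12 : coprime (A n.+1) (A n.+2) by rewrite /coprime (A_rec n.+1) gcd_rec.
have cba : coprime b a.
  rewrite coprime_sym; apply: (coprime_dvdl Ha); exact: (coprime_dvdr Hb).
have cbc : coprime b c.
  apply: (coprime_dvdl Hb); exact: (coprime_dvdr Hc).
have g3 : gcdn a c %| n.+3.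
  have E : A n.+2 = (n.+2 * n.+1) * A n + n.+3.
    by rewrite !A_rec mulnDr muln1 mulnA -addnA addn1.
  have : gcdn a c %| gcdn (A n) (A n.+2) by rewrite dvdn_gcd (dvdn_trans (dvdn_gcdl _ _) Ha) (dvdn_trans (dvdn_gcdr _ _) Hc).
  by rewrite E gcdnC gcdnMDl gcdnC => /dvdn_trans; apply; exact: dvdn_gcdr.
have cbl : coprime b (lcmn a c).
  have H1 : lcmn a c %| a * c by rewrite -muln_lcm_gcd dvdn_mulr.
  have H2 : coprime b (a * c) by rewrite coprimeMr cba cbc.
  exact: coprime_dvdr H1 H2.
have L : b * lcmn a c %| n.+2`!.
  move: (muln_lcm_gcd b (lcmn a c)); rewrite (eqP cbl) muln1 => <-.
  by rewrite dvdn_lcm Fb dvdn_lcm Fa Fc.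
have -> : a * b * c = (b * lcmn a c) * gcdn a c.
  by rewrite -[in RHS]mulnA muln_lcm_gcd (mulnC a b) mulnA.
by rewrite factS mulnC dvdn_mul.
Qed.
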